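(* Let $G$ be a finite abstract simplicial complex. Then $$\sum_{x \in G} w(x)\, w(S(x)) = 0.$$
   Context: A finite abstract simplicial complex $G$ is a finite set of non-empty finite sets such that every non-empty subset of an element of $G$ is again in $G$. For $x\in G$, $w(x)=(-1)^{|x|-1}$, and for $A\subset G$, $w(A)=\sum_{y\in A}w(y)$. $G$ carries the finite topology whose basis consists of the stars $U(x)=\{y\in G : x\subset y\}$. The unit ball $B(x)$ is the closure of $U(x)$, i.e. $B(x)=\{y\in G : y\subset z \text{ for some } z\in G \text{ with } x\subset z\}$, and the unit sphere is $S(x)=B(x)\setminus U(x)$. *)

(* Defs.v *)
From mathcomp Require Import all_boot all_algebra.
Set Implicit Arguments. Unset Strict Implicit. Unset Printing Implicit Defensive.
Import GRing.Theory.
Local Open Scope ring_scope.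

Definition is_complex (T : finType) (G : {set {set T}}) : Prop :=
  set0 \notin G /\
  (forall x y : {set T}, x \in G -> y \subset x -> y != set0 -> y \in G).

Definition w (T : finType) (x : {set T}) : int := (-1) ^+ (#|x|.-1).

Definition wA (T : finType) (A : {set {set T}}) : int := \sum_(y in A) w y.

Definition Ustar (T : finType) (G : {set {set T}}) (x : {set T}) : {set {set T}} :=
  [set y in G | x \subset y].

(* unit ball B(x) = closure of U(x) = {y in G | y ⊆ z for some z in G with x ⊆ z} *)
Definition Bball (T : finType) (G : {set {set T}}) (x : {set T}) : {set {set T}} :=
  [set y in G | [exists z in G, (x \subset z) && (y \subset z)]].

Definition Ssphere (T : finType) (G : {set {set T}}) (x : {set T}) : {set {set T}} :=
  Bball G x :\: Ustar G x.

(* Main.v *)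
Require Import Defs.
From mathcomp Require Import all_boot all_algebra.
From mathcomp Require Import zify.
Local Open Scope ring_scope.
Import GRing.Theory.
Set Implicit Arguments. Unset Strict Implicit. Unset Printing Implicit Defensive.

Definition sg (T : finType) (t : {set T}) : int := (-1) ^+ #|t|.
Definition toggle (T : finType) (a : T) (t : {set T}) : {set T} :=
  if a \in t then t :\ a else a |: t.

Lemma in_toggle (T : finType) (a b : T) (t : {set T}) :
  (b \in toggle a t) = if b == a then a \notin t else b \in t.
Proof.
rewrite /toggle; case: ifP => Ha; rewrite !inE;
  case: (eqVneq b a) => [->|] //=; rewrite Ha.
Qed.

Lemma toggleK (T : finType) (a : T) : involutive (toggle a).
Proof.
move=> t; apply/setP => b; rewrite !in_toggle eqxx.
case: (eqVneq b a) => [->|] //; by rewrite negbK.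
Qed.

Lemma sg_toggle (T : finType) (a : T) t : sg (toggle a t) = - sg t.
Proof.
rewrite /sg /toggle; case: ifP => Ha.
  by rewrite (cardsD1 a t) Ha /= add1n exprS mulN1r opprK.
by rewrite cardsU1 Ha /= add1n exprS mulN1r.
Qed.

Lemma sum_toggle (T : finType) (a : T) (P : pred {set T}) :
  (forall t, P (toggle a t) = P t) -> \sum_(t | P t) sg t = 0.
Proof.
move=> HP.
have E : \sum_(t | P t) sg t = \sum_(t | P t) - sg t.
  rewrite (reindex_inj (can_inj (toggleK a))) /=.
  apply: eq_big => [t|t _]; [exact: HP | exact: sg_toggle].
rewrite sumrN in E; move: E; set S := \sum_(t | P t) sg t; lia.
Qed.

Lemma wE (T : finType) (t : {set T}) : t != set0 -> w t = - sg t.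
Proof.
rewrite -card_gt0 /w /sg; case: #|t| => // n _ /=.
by rewrite exprS mulN1r opprK.
Qed.

Lemma subset_toggle (T : finType) (a : T) (z t : {set T}) :
  a \in z -> (toggle a t \subset z) = (t \subset z).
Proof.
move=> Ha; apply/subsetP/subsetP => H b.
  move=> Hb; case: (eqVneq b a) => [->//|nba]; apply: H.
  by rewrite in_toggle (negPf nba).
rewrite in_toggle; case: (eqVneq b a) => [->|_] //; exact: H.
Qed.

Lemma sum_sub_sg (T : finType) (z : {set T}) :
  z != set0 -> \sum_(y : {set T} | y \subset z) sg y = 0.
Proof.
case/set0Pn => a Ha; apply: (sum_toggle (a:=a)) => t; exact: subset_toggle.
Qed.

Lemma sum_w_sub (T : finType) (z : {set T}) :
  z != set0 -> \sum_(y : {set T} | (y \subset z) && (y != set0)) w y = 1.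
Proof.
move=> nz; have := sum_sub_sg nz.
have sg0 : sg (set0 : {set T}) = 1 by rewrite /sg cards0.
rewrite (bigD1 set0) ?sub0set //= sg0 => H.
rewrite (eq_bigr (fun y => - sg y)); last by move=> y /andP[_]; exact: wE.
rewrite sumrN; move: H; set S := \sum_(i | _) sg i; lia.
Qed.

Lemma sum_w_union (T : finType) (x z : {set T}) : x != set0 ->
  \sum_(y : {set T} | (y != set0) && (x :|: y == z)) w y = if x == z then 1 else 0.
Proof.
move=> nx; case: (eqVneq x z) => [<-|nxz].
  rewrite -(sum_w_sub nx); apply: eq_bigl => y.
  rewrite andbC; congr andb.
  by apply/eqP/idP => [<-|/setUidPl //]; exact: subsetUr.
rewrite (eq_bigr (fun y => - sg y)); last by move=> y /andP[ny _]; exact: wE.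
rewrite sumrN.
rewrite (eq_bigl (fun y => x :|: y == z)); last first.
  move=> y /=; case: (eqVneq y set0) => [->|] //=.
  by rewrite setU0 (negPf nxz).
case/set0Pn: nx => a Ha.
rewrite (sum_toggle (a:=a)) ?oppr0 // => t.
suff -> : x :|: toggle a t = x :|: t by [].
apply/setP => b; rewrite !inE in_toggle.
by case: (eqVneq b a) => [->|]; rewrite ?Ha.
Qed.

Theorem mainTheorem4 (T : finType) (G : {set {set T}}) (HG : is_complex G) :
  \sum_(x in G) w x * wA (Ssphere G x) = 0.
Proof.
case: HG => H0 Hcl.
have ne : forall x, x \in G -> x != set0.
  by move=> x xG; apply/eqP => x0; move: H0; rewrite -x0 xG.
have Scl : forall x y, x \in G -> y \in G ->
    [exists z in G, (x \subset z) && (y \subset z)] = (x :|: y \in G).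
  move=> x y xG yG; apply/existsP/idP => [[z /and3P[zG xz yz]]|uG].
    apply: (Hcl z) => //; first by rewrite subUset xz.
    case/set0Pn: (ne x xG) => a ax; apply/set0Pn; exists a; by rewrite inE ax.
  by exists (x :|: y); rewrite uG subsetUl subsetUr.
have SE : forall x, x \in G -> wA (Ssphere G x) =
    \sum_(y in G | (x :|: y \in G) && ~~ (x \subset y)) w y.
  move=> x xG; rewrite /wA; apply: eq_bigl => y.
  rewrite /Ssphere /Bball /Ustar !inE.
  case yG: (y \in G) => //=.
  by rewrite Scl // andbC.
have Sp : forall x, x \in G ->
    \sum_(y in G | (x :|: y \in G) && ~~ (x \subset y)) w y =
    \sum_(y in G | x :|: y \in G) w y - \sum_(y in G | x \subset y) w y.
  move=> x xG.
  rewrite (bigID (fun y : {set T} => x \subset y) (fun y : {set T} => (y \in G) && (x :|: y \in G))) /=.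
  have E1 : \sum_(y | (y \in G) && (x :|: y \in G) && (x \subset y)) w y
          = \sum_(y in G | x \subset y) w y.
    apply: eq_bigl => y; case: (boolP (x \subset y)) => xy; rewrite ?andbT ?andbF //.
    by rewrite (setUidPr xy) andbb.
  rewrite E1 addrC addrK; apply: eq_bigl => y; by rewrite andbA.
rewrite (eq_bigr (fun x : {set T} => w x * \sum_(y in G | x :|: y \in G) w y
                   - w x * \sum_(y in G | x \subset y) w y)); last first.
  by move=> x xG; rewrite SE // Sp // mulrBr.
rewrite sumrB; apply/eqP; rewrite subr_eq0; apply/eqP.
have R : \sum_(x in G) w x * \sum_(y in G | x \subset y) w y = \sum_(z in G) w z.
  rewrite (eq_bigr (fun x : {set T} => \sum_(y in G) (if x \subset y then w x * w y else 0)));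
    last by move=> x _; rewrite mulr_sumr big_mkcondr.
  rewrite exchange_big /=; apply: eq_bigr => y yG.
  rewrite -big_mkcondr -mulr_suml.
  have -> : \sum_(x in G | x \subset y) w x = 1.
    rewrite -(sum_w_sub (ne y yG)); apply: eq_bigl => x.
    apply/andP/andP => [[xG xy]|[xy nx]]; split => //; [exact: ne | exact: (Hcl y)].
  by rewrite mul1r.
have L : \sum_(x in G) w x * \sum_(y in G | x :|: y \in G) w y = \sum_(z in G) w z.
  have inner : forall x, x \in G -> w x * \sum_(y in G | x :|: y \in G) w y =
      \sum_(y in G) \sum_(z in G) (if x :|: y == z then w x * w y else 0).
    move=> x xG; rewrite mulr_sumr big_mkcondr; apply: eq_bigr => y yG.
    case uG: (x :|: y \in G) => /=.
      rewrite (bigD1 (x :|: y)) //= eqxx big1 ?addr0 // => z /andP[_ nz].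
      by rewrite eq_sym (negPf nz).
    rewrite big1 // => z zG; case: eqP => // e.
    by rewrite -e uG in zG.
  rewrite (eq_bigr _ inner).
  under eq_bigr do rewrite exchange_big.
  rewrite exchange_big /=; apply: eq_bigr => z zG.
  have inner2 : forall x, x \in G ->
      \sum_(y in G) (if x :|: y == z then w x * w y else 0) = w x * (if x == z then 1 else 0).
    move=> x xG; rewrite -big_mkcondr -mulr_sumr -(sum_w_union z (ne x xG)).
    congr (_ * _); apply: eq_bigl => y.
    apply/andP/andP => [[yG e]|[ny e]]; split => //; first exact: ne.
    apply: (Hcl z) => //; rewrite -(eqP e); exact: subsetUr.
  rewrite (eq_bigr _ inner2) (bigD1 z) //= eqxx mulr1 big1 ?addr0 // => x /andP[_ nxz].
  by rewrite (negPf nxz) mulr0.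
by rewrite L R.
Qed.
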